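(* Let $m,n$ be nonzero integers with $|m|<|n|$, let $h=\gcd(m,n)$, $p=|m|/h$, $q=|n|/h$. Let $u_1,u_2$ be vertices of type $a$ of $\Lambda_{m,n}$, with corresponding vertices $\bar u_1,\bar u_2$ of $T$ and corresponding $a$-lines $\ell_1,\ell_2$ of $\Upsilon_{m,n}$. Assume that some $t$-line intersects both $\ell_1$ and $\ell_2$, and let $\ell^{12}_2\subseteq\ell_2$ be the set of all points $\ell_2\cap\ell$ where $\ell$ ranges over the $t$-lines intersecting both $\ell_1$ and $\ell_2$. Then $\ell^{12}_2$ is a set of equally spaced vertices of $\ell_2$, with gap (number of $a$-edges along $\ell_2$ between consecutive elements) equal to $hq^{d_T(\bar u_1,\bar u_2)}$ if $u_2<u_1$, and equal to $hp^{d_T(\bar u_1,\bar u_2)}$ if $u_1<u_2$.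
   Context: $\mathrm{BS}(m,n)=\langle a,t\mid ta^mt^{-1}=a^n\rangle$; $\Upsilon_{m,n}$ is its Cayley graph for $\{a,t\}$ (edges $g\to gs$ oriented and labeled by $s$); $a$-lines and $t$-lines are the subgraphs spanned by left cosets of $\langle a\rangle$ and $\langle t\rangle$. $\Lambda_{m,n}$ has one vertex per $a$-line or $t$-line (of type $a$ or $t$ respectively), adjacent when the lines intersect. $T$ is the Bass–Serre tree: its vertices are the $a$-lines (identified with type-$a$ vertices of $\Lambda_{m,n}$), with one edge, oriented from $\ell$ to $\ell'$, for each pair of $a$-lines $(\ell,\ell')$ such that $gt\in\ell'$ for some $g\in\ell$. Partial order on vertices of $T$ (hence on type-$a$ vertices): $v_1\le v_2$ if every edge on the geodesic from $v_1$ to $v_2$ is oriented from $v_1$ toward $v_2$; $u<u'$ means $u\le u'$ and $u\ne u'$. $d_T$ is the combinatorial distance in $T$. *)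

(* Defs.v *)
(* BS(m,n) is modelled by its presentation: words in the letters
   a, a^-1, t, t^-1, modulo the congruence generated by free cancellation and
   the relator t a^m t^-1 a^-n. *)
From Stdlib Require Import ZArith List Relations.
Import ListNotations.
Open Scope Z_scope.

Inductive letter := LA | LAi | LT | LTi.

Definition word := list letter.

Definition linv (x : letter) : letter :=
  match x with LA => LAi | LAi => LA | LT => LTi | LTi => LT end.

Definition apow (k : Z) : word :=
  if (0 <=? k) then repeat LA (Z.to_nat k) else repeat LAi (Z.to_nat (- k)).
Definition tpow (k : Z) : word :=
  if (0 <=? k) then repeat LT (Z.to_nat k) else repeat LTi (Z.to_nat (- k)).

Definition relator (m n : Z) : word := [LT] ++ apow m ++ [LTi] ++ apow (- n).

Inductive bs_step (m n : Z) : word -> word -> Prop :=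
| step_cancel u v x : bs_step m n (u ++ [x; linv x] ++ v) (u ++ v)
| step_rel u v : bs_step m n (u ++ relator m n ++ v) (u ++ v).

Definition bs_eq (m n : Z) : relation word := clos_refl_sym_trans word (bs_step m n).

Definition same_aline (m n : Z) (g g' : word) : Prop :=
  exists k : Z, bs_eq m n (g ++ apow k) g'.

Definition same_tline (m n : Z) (g g' : word) : Prop :=
  exists k : Z, bs_eq m n (g ++ tpow k) g'.

(* Bass-Serre tree T: vertices are a-lines, represented by any of their points.
   Oriented edge l -> l' iff g t ∈ l' for some g ∈ l. *)
Definition Tedge (m n : Z) (l l' : word) : Prop :=
  exists g, same_aline m n l g /\ same_aline m n l' (g ++ [LT]).

Definition Tadj (m n : Z) (l l' : word) : Prop := Tedge m n l l' \/ Tedge m n l' l.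

Inductive walk (m n : Z) (R : word -> word -> Prop) : word -> word -> nat -> Prop :=
| walk0 x y : same_aline m n x y -> walk m n R x y 0
| walkS x y z k : R x y -> walk m n R y z k -> walk m n R x z (S k).

Definition is_dT (m n : Z) (l l' : word) (d : nat) : Prop :=
  walk m n (Tadj m n) l l' d /\ (forall k, walk m n (Tadj m n) l l' k -> (d <= k)%nat).

Definition Tle (m n : Z) (v1 v2 : word) : Prop :=
  exists d, is_dT m n v1 v2 d /\ walk m n (Tedge m n) v1 v2 d.

Definition Tlt (m n : Z) (v1 v2 : word) : Prop :=
  Tle m n v1 v2 /\ ~ same_aline m n v1 v2.

Definition ell12 (m n : Z) (g1 g2 x : word) : Prop :=
  same_aline m n g2 x /\ exists y, same_aline m n g1 y /\ same_tline m n x y.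

Definition equally_spaced (m n : Z) (S : word -> Prop) (gap : Z) : Prop :=
  exists x0, S x0 /\ forall x, S x <-> exists k : Z, bs_eq m n (x0 ++ apow (gap * k)) x.

(* Main.v *)
Require Import Defs.
From Stdlib Require Import ZArith List Relations Setoid Morphisms Lia Znumtheory Bool.
Import ListNotations.
Open Scope Z_scope.

Lemma bs_eq_refl m n x : bs_eq m n x x.
Proof. apply rst_refl. Qed.
Lemma bs_eq_sym m n x y : bs_eq m n x y -> bs_eq m n y x.
Proof. apply rst_sym. Qed.
Lemma bs_eq_trans m n x y z : bs_eq m n x y -> bs_eq m n y z -> bs_eq m n x z.
Proof. apply rst_trans. Qed.

Add Parametric Relation m n : word (bs_eq m n)
  reflexivity proved by (bs_eq_refl m n)
  symmetry proved by (bs_eq_sym m n)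
  transitivity proved by (bs_eq_trans m n) as bs_eq_rel.

Lemma bs_step_ctx m n u v w1 w2 : bs_step m n u v -> bs_step m n (w1 ++ u ++ w2) (w1 ++ v ++ w2).
Proof.
  intros H; destruct H.
  - replace (w1 ++ (u ++ [x; linv x] ++ v) ++ w2) with ((w1 ++ u) ++ [x; linv x] ++ (v ++ w2))
      by (repeat rewrite <- app_assoc; reflexivity).
    replace (w1 ++ (u ++ v) ++ w2) with ((w1 ++ u) ++ (v ++ w2)) by (repeat rewrite <- app_assoc; reflexivity).
    constructor.
  - replace (w1 ++ (u ++ relator m n ++ v) ++ w2) with ((w1 ++ u) ++ relator m n ++ (v ++ w2))
      by (repeat rewrite <- app_assoc; reflexivity).
    replace (w1 ++ (u ++ v) ++ w2) with ((w1 ++ u) ++ (v ++ w2)) by (repeat rewrite <- app_assoc; reflexivity).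
    constructor.
Qed.

Lemma bs_eq_ctx m n u v w1 w2 : bs_eq m n u v -> bs_eq m n (w1 ++ u ++ w2) (w1 ++ v ++ w2).
Proof.
  intros H; induction H.
  - apply rst_step, bs_step_ctx; auto.
  - reflexivity.
  - symmetry; auto.
  - etransitivity; eauto.
Qed.

Add Parametric Morphism m n : (@app letter) with
  signature (bs_eq m n) ==> (bs_eq m n) ==> (bs_eq m n) as app_mor.
Proof.
  intros x y Hxy u v Huv.
  transitivity (y ++ u).
  - pose proof (bs_eq_ctx m n x y [] u Hxy) as H; simpl in H; exact H.
  - pose proof (bs_eq_ctx m n u v y [] Huv) as H; rewrite !app_nil_r in H; exact H.
Qed.

Add Parametric Morphism m n x : (@cons letter x) with
  signature (bs_eq m n) ==> (bs_eq m n) as cons_mor.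
Proof. intros u v H. change (x :: u) with ([x] ++ u). change (x :: v) with ([x] ++ v). rewrite H. reflexivity. Qed.

Lemma cancel m n x : bs_eq m n [x; linv x] [].
Proof.
  pose proof (rst_step _ _ _ _ (step_cancel m n [] [] x)) as H; simpl in H; exact H.
Qed.

Lemma linv_inv x : linv (linv x) = x.
Proof. destruct x; reflexivity. Qed.

Lemma cancel' m n x : bs_eq m n [linv x; x] [].
Proof. rewrite <- (linv_inv x) at 2. apply cancel. Qed.

Definition pw (x y : letter) (k : Z) : word :=
  if (0 <=? k) then repeat x (Z.to_nat k) else repeat y (Z.to_nat (- k)).

Lemma apow_pw k : apow k = pw LA LAi k. Proof. reflexivity. Qed.
Lemma tpow_pw k : tpow k = pw LT LTi k. Proof. reflexivity. Qed.

Lemma repeat_S_r {A} (x : A) k : repeat x (S k) = repeat x k ++ [x].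
Proof. induction k; simpl; auto. rewrite <- IHk. reflexivity. Qed.

Lemma pw_succ m n x y : linv y = x -> forall i, bs_eq m n (pw x y i ++ [x]) (pw x y (i + 1)).
Proof.
  intros Hy i. unfold pw.
  destruct (0 <=? i) eqn:E1.
  - apply Z.leb_le in E1. destruct (0 <=? i + 1) eqn:E2; [|apply Z.leb_nle in E2; lia].
    replace (Z.to_nat (i+1)) with (S (Z.to_nat i)) by lia. rewrite repeat_S_r. reflexivity.
  - apply Z.leb_nle in E1.
    replace (Z.to_nat (- i)) with (S (Z.to_nat (- (i+1)))) by lia.
    rewrite repeat_S_r. rewrite <- app_assoc. simpl. rewrite <- Hy. rewrite cancel. rewrite app_nil_r.
    destruct (0 <=? i + 1) eqn:E2.
    + apply Z.leb_le in E2. replace (Z.to_nat (- (i+1))) with 0%nat by lia.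
      replace (Z.to_nat (i+1)) with 0%nat by lia. reflexivity.
    + reflexivity.
Qed.

Lemma pw_pred m n x y : linv x = y -> forall i, bs_eq m n (pw x y i ++ [y]) (pw x y (i - 1)).
Proof.
  intros Hy i. unfold pw.
  destruct (0 <=? i) eqn:E1.
  - apply Z.leb_le in E1.
    destruct (Z.eq_dec i 0) as [->|Hi].
    + simpl. reflexivity.
    + replace (Z.to_nat i) with (S (Z.to_nat (i-1))) by lia.
      rewrite repeat_S_r. rewrite <- app_assoc. simpl. rewrite <- Hy. rewrite cancel. rewrite app_nil_r.
      destruct (0 <=? i - 1) eqn:E2; [reflexivity|apply Z.leb_nle in E2; lia].
  - apply Z.leb_nle in E1. destruct (0 <=? i - 1) eqn:E2; [apply Z.leb_le in E2; lia|].
    replace (Z.to_nat (- (i - 1))) with (S (Z.to_nat (- i))) by lia.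
    rewrite repeat_S_r. reflexivity.
Qed.

Lemma pw_add m n x y : linv x = y -> forall i j, bs_eq m n (pw x y i ++ pw x y j) (pw x y (i + j)).
Proof.
  intros Hxy i j. revert i. induction j using Z.peano_ind; intros i.
  - simpl. rewrite app_nil_r, Z.add_0_r. reflexivity.
  - assert (Hyx : linv y = x) by (subst; apply linv_inv).
    rewrite <- Z.add_1_r. rewrite <- (pw_succ m n x y Hyx j). rewrite app_assoc. rewrite IHj.
    rewrite pw_succ by auto. rewrite Z.add_assoc. reflexivity.
  - rewrite <- Z.sub_1_r. rewrite <- (pw_pred m n x y Hxy j). rewrite app_assoc. rewrite IHj.
    rewrite pw_pred by auto. replace (i + (j-1)) with (i + j - 1) by lia; reflexivity.
Qed.

Lemma apow_add m n i j : bs_eq m n (apow i ++ apow j) (apow (i + j)).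
Proof. apply pw_add; reflexivity. Qed.
Lemma tpow_add m n i j : bs_eq m n (tpow i ++ tpow j) (tpow (i + j)).
Proof. apply pw_add; reflexivity. Qed.
Lemma apow0 : apow 0 = []. Proof. reflexivity. Qed.
Lemma tpow0 : tpow 0 = []. Proof. reflexivity. Qed.

Lemma apow_inv m n i : bs_eq m n (apow i ++ apow (- i)) [].
Proof. rewrite apow_add. rewrite Z.add_opp_diag_r. reflexivity. Qed.
Lemma apow_inv' m n i : bs_eq m n (apow (- i) ++ apow i) [].
Proof. rewrite apow_add. rewrite Z.add_opp_diag_l. reflexivity. Qed.
Lemma tpow_inv m n i : bs_eq m n (tpow i ++ tpow (- i)) [].
Proof. rewrite tpow_add. rewrite Z.add_opp_diag_r. reflexivity. Qed.
Lemma tpow_inv' m n i : bs_eq m n (tpow (- i) ++ tpow i) [].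
Proof. rewrite tpow_add. rewrite Z.add_opp_diag_l. reflexivity. Qed.

Definition winv (w : word) : word := rev (map linv w).

Lemma winv_l m n w : bs_eq m n (winv w ++ w) [].
Proof.
  induction w as [|l w IH]; [reflexivity|].
  unfold winv in *. simpl. rewrite <- app_assoc. simpl.
  change (linv l :: l :: w) with ([linv l; l] ++ w). rewrite cancel'. simpl. exact IH.
Qed.

Lemma cancel_l m n x u v : bs_eq m n (x ++ u) (x ++ v) -> bs_eq m n u v.
Proof.
  intros H. transitivity (winv x ++ x ++ u).
  - rewrite app_assoc, winv_l. reflexivity.
  - rewrite H. rewrite app_assoc, winv_l. reflexivity.
Qed.

Lemma t_am m n : bs_eq m n ([LT] ++ apow m) (apow n ++ [LT]).
Proof.
  pose proof (rst_step _ _ _ _ (step_rel m n [] [])) as H; simpl in H. unfold relator in H.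
  transitivity (([LT] ++ apow m ++ [LTi] ++ apow (- n)) ++ apow n ++ [LT]).
  - rewrite <- !app_assoc. rewrite (app_assoc (apow (-n))). rewrite (apow_inv' m n). simpl.
    change (LTi :: LT :: nil) with [linv LT; LT]. rewrite cancel'. rewrite app_nil_r. reflexivity.
  - assert (H' : bs_eq m n ([LT] ++ apow m ++ [LTi] ++ apow (- n)) []).
    { unfold relator in H. rewrite app_nil_r in H. exact H. }
    rewrite H'. reflexivity.
Qed.

Lemma conj_pow m n w i j : bs_eq m n (w ++ apow i) (apow j ++ w) ->
  forall s, bs_eq m n (w ++ apow (i * s)) (apow (j * s) ++ w).
Proof.
  intros H s. induction s using Z.peano_ind.
  - rewrite !Z.mul_0_r. simpl. rewrite app_nil_r. reflexivity.
  - rewrite !Z.mul_succ_r. rewrite <- !apow_add. rewrite app_assoc, IHs, <- app_assoc, H.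
    rewrite app_assoc. reflexivity.
  - rewrite !Z.mul_pred_r. unfold Z.sub. rewrite <- !apow_add.
    (* w a^{i s} a^{-i} = a^{j s} w a^{-i};  w a^{-i} = a^{-j} w *)
    assert (H2 : bs_eq m n (w ++ apow (- i)) (apow (- j) ++ w)).
    { transitivity (apow (-j) ++ (apow j ++ w) ++ apow (- i)).
      - rewrite <- (app_assoc (apow j) w), (app_assoc (apow (-j)) (apow j)), (apow_inv' m n j). reflexivity.
      - rewrite <- H. rewrite <- (app_assoc w), (apow_inv m n i), app_nil_r. reflexivity. }
    rewrite app_assoc, IHs, <- app_assoc, H2, app_assoc. reflexivity.
Qed.

Definition lv (l : letter) : Z := match l with LT => 1 | LTi => -1 | _ => 0 end.
Definition tsum (w : word) : Z := fold_right (fun l acc => lv l + acc) 0 w.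

Lemma tsum_app u v : tsum (u ++ v) = tsum u + tsum v.
Proof. induction u; simpl; [reflexivity|]. unfold tsum in *. simpl. rewrite IHu. lia. Qed.

Lemma tsum_repeat x k : tsum (repeat x k) = Z.of_nat k * lv x.
Proof. induction k; [reflexivity|]. change (repeat x (S k)) with (x :: repeat x k). unfold tsum in *. cbn [fold_right]. rewrite IHk. rewrite Nat2Z.inj_succ. ring. Qed.

Lemma tsum_apow k : tsum (apow k) = 0.
Proof. unfold apow. destruct (0 <=? k); rewrite tsum_repeat; simpl; lia. Qed.

Lemma tsum_tpow k : tsum (tpow k) = k.
Proof. unfold tpow. destruct (0 <=? k) eqn:E; rewrite tsum_repeat; simpl.
  - apply Z.leb_le in E. lia.
  - apply Z.leb_nle in E. lia. Qed.

Lemma tsum_bs m n u v : bs_eq m n u v -> tsum u = tsum v.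
Proof.
  intros H; induction H; try congruence.
  destruct H.
  - rewrite !tsum_app. destruct x; simpl; unfold tsum; simpl; lia.
  - rewrite !tsum_app. unfold relator. rewrite !tsum_app, !tsum_apow. simpl. lia.
Qed.

Definition st := (list (Z * bool) * Z)%type.

Definition stepE (m n : Z) (e : bool) (s : st) : st :=
  let (L, c) := s in
  let N := if e then n else m in
  let M := if e then m else n in
  let r := c mod N in
  let q := c / N in
  match L with
  | (c', e') :: L' => if Bool.eqb e' (negb e) && (r =? 0) then (L', c' + M * q) else ((r, e) :: L, M * q)
  | [] => ([(r, e)], M * q)
  end.

Definition actl (m n : Z) (l : letter) (s : st) : st :=
  match l with
  | LA => (fst s, snd s + 1)
  | LAi => (fst s, snd s - 1)
  | LT => stepE m n true s
  | LTi => stepE m n false s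
  end.

Definition act (m n : Z) (w : word) (s : st) : st := fold_left (fun s l => actl m n l s) w s.

Definition canon (m n c : Z) (e : bool) : Prop := c mod (if e then n else m) = c.

Fixpoint wfL (m n : Z) (L : list (Z * bool)) : Prop :=
  match L with
  | [] => True
  | (c, e) :: L' => canon m n c e /\
      (match L' with [] => True | (_, e') :: _ => ~ (e' = negb e /\ c = 0) end) /\ wfL m n L'
  end.

Definition wf m n (s : st) := wfL m n (fst s).

Lemma act_app m n u v s : act m n (u ++ v) s = act m n v (act m n u s).
Proof. unfold act. apply fold_left_app. Qed.

Lemma div_small c M : M <> 0 -> c mod M = c -> c / M = 0.
Proof.
  intros HM H. pose proof (Z.div_mod c M HM) as E. rewrite H in E.
  assert (M * (c / M) = 0) by lia. apply Z.mul_eq_0 in H0. lia.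
Qed.

Lemma stepE_wf m n e s : m <> 0 -> n <> 0 -> wf m n s -> wf m n (stepE m n e s).
Proof.
  intros Hm Hn. destruct s as [L c]. unfold wf; simpl.
  destruct L as [|[c' e'] L'].
  - simpl. intros _. split; [|tauto]. unfold canon. destruct e; apply Z.mod_mod; auto.
  - intros (H1 & H2 & H3).
    destruct (Bool.eqb e' (negb e) && (c mod (if e then n else m) =? 0)) eqn:E.
    + simpl. exact H3.
    + simpl. split; [|split].
      * unfold canon. destruct e; apply Z.mod_mod; auto.
      * intros [He Hr]. rewrite He, Hr in E. rewrite eqb_reflx in E. simpl in E. discriminate.
      * auto.
Qed.

Lemma actl_wf m n l s : m <> 0 -> n <> 0 -> wf m n s -> wf m n (actl m n l s).
Proof. intros. destruct l; simpl; auto; apply stepE_wf; auto. Qed.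

Lemma act_wf m n w s : m <> 0 -> n <> 0 -> wf m n s -> wf m n (act m n w s).
Proof.
  intros Hm Hn. revert s. induction w; intros s Hs; simpl; auto.
  apply IHw. apply actl_wf; auto.
Qed.

Lemma stepE_inv m n e s : m <> 0 -> n <> 0 -> wf m n s -> stepE m n (negb e) (stepE m n e s) = s.
Proof.
  intros Hm Hn. destruct s as [L c]. unfold wf; simpl.
  set (N := if e then n else m). set (M := if e then m else n).
  assert (HN : N <> 0) by (unfold N; destruct e; auto).
  assert (HM : M <> 0) by (unfold M; destruct e; auto).
  assert (EN : (if negb e then n else m) = M) by (unfold M; destruct e; auto).
  assert (EM : (if negb e then m else n) = N) by (unfold N; destruct e; auto).
  pose proof (Z.div_mod c N HN) as Ec.
  assert (Hcase : forall L0,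
     stepE m n (negb e) ((c mod N, e) :: L0, M * (c / N)) = (L0, c)).
  { intros L0. simpl. rewrite EN, EM.
    rewrite Z.mul_comm, Z.mod_mul, Z.div_mul by auto. rewrite negb_involutive, eqb_reflx. simpl.
    f_equal. lia. }
  destruct L as [|[c' e'] L'].
  - intros _. simpl. fold N M. apply (Hcase []).
  - intros (H1 & H2 & H3). simpl. fold N M.
    destruct (Bool.eqb e' (negb e) && (c mod N =? 0)) eqn:E.
    + apply andb_true_iff in E. destruct E as [E1 E2]. apply eqb_prop in E1. apply Z.eqb_eq in E2.
      subst e'. unfold canon in H1. rewrite EN in H1.
      simpl. rewrite EN, EM.
      rewrite (Z.mul_comm M (c / N)), Z.mod_add, Z.div_add by auto. rewrite H1.
      rewrite (div_small c' M HM H1).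
      destruct L' as [|[c'' e''] L''].
      * f_equal. f_equal. lia.
      * destruct (Bool.eqb e'' (negb (negb e)) && (c' =? 0)) eqn:E3.
        -- exfalso. apply andb_true_iff in E3. destruct E3 as [E3 E4]. apply eqb_prop in E3.
           apply Z.eqb_eq in E4. apply H2. split; auto.
        -- f_equal. f_equal. lia.
    + apply Hcase.
Qed.

Lemma act_repA m n j L c : act m n (repeat LA j) (L, c) = (L, c + Z.of_nat j).
Proof. revert c; induction j; intros c; simpl. f_equal; lia. rewrite IHj. f_equal; lia. Qed.
Lemma act_repAi m n j L c : act m n (repeat LAi j) (L, c) = (L, c - Z.of_nat j).
Proof. revert c; induction j; intros c; simpl. f_equal; lia. rewrite IHj. f_equal; lia. Qed.

Lemma act_apow m n k L c : act m n (apow k) (L, c) = (L, c + k).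
Proof.
  unfold apow. destruct (0 <=? k) eqn:E.
  - apply Z.leb_le in E. rewrite act_repA. f_equal. lia.
  - apply Z.leb_nle in E. rewrite act_repAi. f_equal. lia.
Qed.

Lemma act_relator m n s : m <> 0 -> n <> 0 -> wf m n s -> act m n (relator m n) s = s.
Proof.
  intros Hm Hn. destruct s as [L c]. unfold wf; simpl. intros HL.
  unfold relator. rewrite !act_app.
  change (act m n [LT] (L, c)) with (stepE m n true (L, c)).
  pose proof (Z.div_mod c n Hn) as Ec.
  destruct L as [|[c' e'] L'].
  - simpl. rewrite act_apow. simpl.
    replace (m * (c / n) + m) with (0 + (c / n + 1) * m) by ring.
    rewrite Z.mod_add, Z.div_add by auto. simpl. rewrite act_apow. f_equal. lia.
  - destruct HL as (H1 & H2 & H3).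
    simpl. destruct (Bool.eqb e' false && (c mod n =? 0)) eqn:E.
    + apply andb_true_iff in E. destruct E as [E1 E2]. apply eqb_prop in E1. apply Z.eqb_eq in E2.
      subst e'. unfold canon in H1. simpl in H1.
      rewrite act_apow. simpl.
      replace (c' + m * (c / n) + m) with (c' + (c / n + 1) * m) by ring.
      rewrite Z.mod_add, Z.div_add by auto. rewrite H1. rewrite (div_small c' m Hm H1).
      destruct L' as [|[c'' e''] L''].
      * rewrite act_apow. f_equal. lia.
      * destruct (Bool.eqb e'' true && (c' =? 0)) eqn:E3.
        -- exfalso. apply andb_true_iff in E3. destruct E3 as [E3 E4]. apply eqb_prop in E3.
           apply Z.eqb_eq in E4. apply H2. split; auto.
        -- rewrite act_apow. f_equal. lia.
    + rewrite act_apow. simpl.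
      replace (m * (c / n) + m) with (0 + (c / n + 1) * m) by ring.
      rewrite Z.mod_add, Z.div_add by auto. simpl. rewrite act_apow. f_equal. lia.
Qed.

Lemma act_bs m n u v : m <> 0 -> n <> 0 -> bs_eq m n u v -> forall s, wf m n s -> act m n u s = act m n v s.
Proof.
  intros Hm Hn H. induction H; intros s Hs.
  - destruct H.
    + rewrite !act_app. f_equal.
      assert (Hw : wf m n (act m n u s)) by (apply act_wf; auto).
      destruct x; simpl; try (destruct (act m n u s); simpl; f_equal; lia);
        [apply (stepE_inv m n true) | apply (stepE_inv m n false)]; auto.
    + rewrite !act_app. f_equal. apply act_relator; auto. apply act_wf; auto.
  - reflexivity.
  - symmetry; auto.
  - rewrite IHclos_refl_sym_trans1 by auto. apply IHclos_refl_sym_trans2; auto.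
Qed.

Lemma repeat_S_r0 {A} (x : A) k : repeat x (S k) = repeat x k ++ [x].
Proof. induction k; simpl; auto. rewrite <- IHk. reflexivity. Qed.

Lemma act_repT m n k : act m n (repeat LT k) ([], 0) = (repeat (0, true) k, 0).
Proof.
  induction k; [reflexivity|].
  rewrite (repeat_S_r0 LT k), act_app, IHk. simpl.
  rewrite Zmod_0_l, Zdiv_0_l, Z.mul_0_r. destruct k; reflexivity.
Qed.

Fixpoint Rk (m n : Z) (k : nat) (e f : Z) : Prop :=
  match k with 0%nat => e = f | S k => exists s, e = m * s /\ Rk m n k (n * s) f end.

Lemma act_headfalse m n k r L c : fst (act m n (repeat LTi k) ((r, false) :: L, c)) <> [].
Proof.
  revert r L c; induction k; intros r L c; simpl; [discriminate|].
  apply IHk.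
Qed.

Lemma act_repTi m n k e f : act m n (repeat LTi k) (repeat (0, true) k, e) = ([], f) -> Rk m n k e f.
Proof.
  revert e; induction k; intros e H.
  - simpl in H. inversion H; reflexivity.
  - change (repeat LTi (S k)) with (LTi :: repeat LTi k) in H.
    change (repeat (0, true) (S k)) with ((0, true) :: repeat (0, true) k) in H.
    unfold act in H; simpl in H; fold (act m n (repeat LTi k)) in H.
    destruct (e mod m =? 0) eqn:E.
    + simpl in H. apply Z.eqb_eq in E. exists (e / m). split.
      * pose proof (Z.div_mod e m). destruct (Z.eq_dec m 0) as [->|Hm].
        -- rewrite Zmod_0_r in E. subst e. reflexivity.
        -- specialize (H0 Hm). lia.
      * apply IHk. exact H.
    + simpl in H. exfalso. apply (act_headfalse m n k (e mod m) ((0,true)::repeat (0,true) k) (n*(e/m))). unfold act. rewrite H. reflexivity.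
Qed.

Lemma gcd_pow_1 a b k : Z.gcd a b = 1 -> Z.gcd (a ^ Z.of_nat k) b = 1.
Proof.
  intros H. apply Zgcd_1_rel_prime. apply Zgcd_1_rel_prime in H.
  induction k.
  - simpl. apply rel_prime_1.
  - rewrite Nat2Z.inj_succ, Z.pow_succ_r by lia.
    apply rel_prime_sym. apply rel_prime_mult; apply rel_prime_sym; auto.
Qed.

Lemma Rk_arith m n m' n' h k e f : h <> 0 -> m = m' * h -> n = n' * h -> m' <> 0 ->
  Z.gcd m' n' = 1 -> Rk m n (S k) e f ->
  exists v, e = m * m' ^ Z.of_nat k * v /\ f = n * n' ^ Z.of_nat k * v.
Proof.
  intros Hh Hm Hn Hm' Hg. revert e. induction k; intros e H.
  - destruct H as [s [Hs Hf]]. simpl in Hf. exists s. simpl. split; lia.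
  - destruct H as [s [Hs HR]].
    destruct (IHk _ HR) as [v [Hv Hf]].
    set (P := m' ^ Z.of_nat (S k)).
    assert (HP : P = m' * m' ^ Z.of_nat k) by (unfold P; rewrite Nat2Z.inj_succ, Z.pow_succ_r; lia).
    assert (HPn : P <> 0) by (unfold P; apply Z.pow_nonzero; lia).
    assert (E1 : n' * s = P * v).
    { apply (Z.mul_reg_r _ _ h Hh). rewrite HP. subst m n. lia. }
    assert (Hd : (P | s)).
    { apply (Z.gauss P n' s). rewrite E1. exists v. ring. apply gcd_pow_1. auto. }
    destruct Hd as [w Hw].
    assert (Ev : v = n' * w).
    { apply (Z.mul_reg_r _ _ P HPn). subst s. lia. }
    exists w. split.
    + rewrite Hs, Hw. fold P. ring.
    + rewrite Hf, Ev. rewrite Nat2Z.inj_succ, Z.pow_succ_r by lia. ring.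
Qed.

Lemma tpow_nat k : tpow (Z.of_nat k) = repeat LT k.
Proof. unfold tpow. destruct (0 <=? Z.of_nat k) eqn:E; [rewrite Nat2Z.id; reflexivity|apply Z.leb_nle in E; lia]. Qed.

Lemma tpow_negnat k : tpow (- Z.of_nat k) = repeat LTi k.
Proof. unfold tpow. destruct k; [reflexivity|].
  destruct (0 <=? - Z.of_nat (S k)) eqn:E; [apply Z.leb_le in E; lia|]. rewrite Z.opp_involutive, Nat2Z.id. reflexivity. Qed.

Lemma keyK m n k e f : m <> 0 -> n <> 0 ->
  bs_eq m n (tpow (Z.of_nat k) ++ apow e ++ tpow (- Z.of_nat k)) (apow f) -> Rk m n k e f.
Proof.
  intros Hm Hn H. apply act_bs with (s := ([], 0)) in H; auto; [|exact I].
  rewrite !act_app, tpow_nat, tpow_negnat, act_repT, act_apow, act_apow in H.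
  apply act_repTi. rewrite Z.add_0_l in H. rewrite H. f_equal; lia.
Qed.

Lemma sa_refl m n g : same_aline m n g g.
Proof. exists 0. rewrite apow0, app_nil_r. reflexivity. Qed.

Lemma sa_sym m n x y : same_aline m n x y -> same_aline m n y x.
Proof.
  intros [k Hk]. exists (- k). rewrite <- Hk. rewrite <- app_assoc, apow_inv, app_nil_r. reflexivity.
Qed.

Lemma sa_trans m n x y z : same_aline m n x y -> same_aline m n y z -> same_aline m n x z.
Proof.
  intros [k Hk] [j Hj]. exists (k + j). rewrite <- apow_add, app_assoc, Hk. exact Hj.
Qed.

Lemma sa_diff m n g a b : same_aline m n g a -> same_aline m n g b -> exists r, bs_eq m n (a ++ apow r) b.
Proof. intros Ha Hb. apply (sa_trans m n a g b); auto. apply sa_sym; auto. Qed.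

Lemma sa_tsum m n x y : same_aline m n x y -> tsum x = tsum y.
Proof. intros [k Hk]. apply tsum_bs in Hk. rewrite tsum_app, tsum_apow in Hk. lia. Qed.

Lemma Tedge_tsum m n l l' : Tedge m n l l' -> tsum l' = tsum l + 1.
Proof.
  intros [g [H1 H2]]. apply sa_tsum in H1. apply sa_tsum in H2. rewrite tsum_app in H2.
  change (tsum [LT]) with 1 in H2. lia.
Qed.

Lemma walk_Tedge_tsum m n x y k : walk m n (Tedge m n) x y k -> tsum y = tsum x + Z.of_nat k.
Proof.
  induction 1.
  - apply sa_tsum in H. simpl. lia.
  - apply Tedge_tsum in H. rewrite IHwalk, H. lia.
Qed.

Lemma Tadj_inv m n x x' y : same_aline m n x x' -> Tadj m n x' y -> Tadj m n x y.
Proof.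
  intros Hx [[g [H1 H2]]|[g [H1 H2]]].
  - left. exists g. split; auto. eapply sa_trans; eauto.
  - right. exists g. split; auto. eapply sa_trans; eauto.
Qed.

Lemma walk_snoc m n x y z k : walk m n (Tadj m n) x y k -> Tadj m n y z -> walk m n (Tadj m n) x z (S k).
Proof.
  induction 1; intros Hz.
  - apply walkS with z. eapply Tadj_inv; eauto. apply walk0, sa_refl.
  - apply walkS with y; auto.
Qed.

Lemma walk_rev m n x y k : walk m n (Tadj m n) x y k -> walk m n (Tadj m n) y x k.
Proof.
  induction 1.
  - apply walk0, sa_sym; auto.
  - apply walk_snoc with y; auto. destruct H; [right|left]; auto.
Qed.

Lemma walk_Tedge_Tadj m n x y k : walk m n (Tedge m n) x y k -> walk m n (Tadj m n) x y k.
Proof. induction 1; [apply walk0; auto|apply walkS with y; [left|]; auto]. Qed.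

Lemma L1 m n m' n' h : m = m' * h -> n = n' * h -> forall k v,
  bs_eq m n (tpow (Z.of_nat k) ++ apow (h * m' ^ Z.of_nat k * v))
            (apow (h * n' ^ Z.of_nat k * v) ++ tpow (Z.of_nat k)).
Proof.
  intros Hm Hn k. induction k; intros v.
  - simpl. rewrite app_nil_r. reflexivity.
  - assert (Ht : bs_eq m n (tpow (Z.of_nat (S k))) (tpow (Z.of_nat k) ++ [LT])).
    { rewrite Nat2Z.inj_succ, <- Z.add_1_r. rewrite <- tpow_add. reflexivity. }
    rewrite Ht.
    replace (h * m' ^ Z.of_nat (S k) * v) with (m * (m' ^ Z.of_nat k * v))
      by (rewrite Nat2Z.inj_succ, Z.pow_succ_r by lia; subst; ring).
    rewrite <- app_assoc. rewrite (conj_pow m n [LT] m n (t_am m n)).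
    replace (n * (m' ^ Z.of_nat k * v)) with (h * m' ^ Z.of_nat k * (n' * v)) by (subst; ring).
    rewrite app_assoc, IHk.
    replace (h * n' ^ Z.of_nat k * (n' * v)) with (h * n' ^ Z.of_nat (S k) * v)
      by (rewrite Nat2Z.inj_succ, Z.pow_succ_r by lia; ring).
    rewrite <- app_assoc. rewrite <- Ht. reflexivity.
Qed.

Lemma abs_pow_split a k : exists s, Z.abs a ^ k = a ^ k * s /\ (s = 1 \/ s = -1).
Proof.
  rewrite <- Z.abs_pow. destruct (Z.abs_eq_or_opp (a ^ k)) as [E|E]; rewrite E.
  - exists 1. split; [ring|auto].
  - exists (-1). split; [ring|auto].
Qed.

Theorem lemma3p6 (m n : Z) (g1 g2 : word) :
  m <> 0 -> n <> 0 -> Z.abs m < Z.abs n ->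
  (exists x, ell12 m n g1 g2 x) ->
  forall d : nat, is_dT m n g1 g2 d ->
    let h := Z.gcd m n in
    let p := Z.abs m / h in
    let q := Z.abs n / h in
    (Tlt m n g2 g1 -> equally_spaced m n (ell12 m n g1 g2) (h * q ^ Z.of_nat d)) /\
    (Tlt m n g1 g2 -> equally_spaced m n (ell12 m n g1 g2) (h * p ^ Z.of_nat d)).
Proof.
  intros Hm Hn _ [x0 [Hx0a [y0 [Hy0a [k0 Hk0]]]]] d [Hd1 Hd2]. cbv zeta.
  destruct (Z.gcd_divide_l m n) as [m' Em].
  destruct (Z.gcd_divide_r m n) as [n' En].
  set (h := Z.gcd m n) in *.
  assert (Hh0 : 0 <= h) by apply Z.gcd_nonneg.
  assert (Hh : h <> 0) by (intro E; apply Z.gcd_eq_0 in E; lia).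
  assert (Hm' : m' <> 0) by (intro E0; rewrite E0 in Em; lia).
  assert (Hg : Z.gcd m' n' = 1).
  { pose proof (Z.gcd_mul_mono_r m' n' h) as E. rewrite <- Em, <- En in E. fold h in E.
    rewrite Z.abs_eq in E by lia. apply (Z.mul_reg_r _ _ h Hh). lia. }
  assert (Hp : Z.abs m / h = Z.abs m').
  { rewrite Em, Z.abs_mul, (Z.abs_eq h) by lia. apply Z.div_mul; auto. }
  assert (Hq : Z.abs n / h = Z.abs n').
  { rewrite En, Z.abs_mul, (Z.abs_eq h) by lia. apply Z.div_mul; auto. }
  rewrite Hp, Hq.
  assert (Hts0 : tsum x0 + k0 = tsum g1 - tsum g2 + tsum x0).
  { apply tsum_bs in Hk0. rewrite tsum_app, tsum_tpow in Hk0. apply sa_tsum in Hx0a. apply sa_tsum in Hy0a. lia. }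
  split; intros [[d' [[Hw' Hmin'] He']] Hns].
  -
    assert (Edd : d' = d).
    { apply Nat.le_antisymm.
      - apply Hmin'. apply walk_rev. exact Hd1.
      - apply Hd2. apply walk_rev. exact Hw'. }
    subst d'.
    destruct d as [|k]; [exfalso; apply Hns; inversion He'; assumption|].
    pose proof (walk_Tedge_tsum _ _ _ _ _ He') as Ets.
    assert (Ek0 : k0 = Z.of_nat (S k)) by lia. subst k0.
    exists x0. split; [split; [auto|exists y0; split; auto; exists (Z.of_nat (S k)); auto]|].
    intros x. split.
    + intros [Hxa [y1 [Hy1a [k1 Hk1]]]].
      assert (Ek1 : k1 = Z.of_nat (S k)).
      { apply tsum_bs in Hk1. rewrite tsum_app, tsum_tpow in Hk1. apply sa_tsum in Hxa. apply sa_tsum in Hy1a.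
        apply sa_tsum in Hx0a. lia. }
      subst k1.
      destruct (sa_diff _ _ _ _ _ Hx0a Hxa) as [r Hr].
      destruct (sa_diff _ _ _ _ _ Hy0a Hy1a) as [c Hc].
      set (T := tpow (Z.of_nat (S k))) in *.
      assert (E1 : bs_eq m n (x0 ++ apow r ++ T) (x0 ++ T ++ apow c)).
      { rewrite app_assoc, Hr, Hk1, <- Hc, app_assoc, Hk0. reflexivity. }
      apply cancel_l in E1.
      assert (E2 : bs_eq m n (T ++ apow c ++ tpow (- Z.of_nat (S k))) (apow r)).
      { rewrite app_assoc, <- E1. rewrite <- app_assoc. unfold T. rewrite tpow_inv, app_nil_r. reflexivity. }
      apply keyK in E2; auto.
      destruct (Rk_arith m n m' n' h k c r Hh Em En Hm' Hg E2) as [v [_ Hv]].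
      destruct (abs_pow_split n' (Z.of_nat (S k))) as [s [Hs Hs1]].
      exists (s * v). rewrite Hs.
      replace (h * (n' ^ Z.of_nat (S k) * s) * (s * v)) with r.
      * exact Hr.
      * rewrite Hv, En, Nat2Z.inj_succ, Z.pow_succ_r by lia.
        destruct Hs1; subst s; ring.
    + intros [j Hj].
      destruct (abs_pow_split n' (Z.of_nat (S k))) as [s [Hs Hs1]].
      rewrite Hs in Hj.
      split.
      * destruct Hx0a as [al Hal]. exists (al + h * (n' ^ Z.of_nat (S k) * s) * j).
        rewrite <- apow_add, app_assoc, Hal. exact Hj.
      * exists (y0 ++ apow (h * m' ^ Z.of_nat (S k) * (s * j))). split.
        -- destruct Hy0a as [al Hal]. exists (al + h * m' ^ Z.of_nat (S k) * (s * j)).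
           rewrite <- apow_add, app_assoc, Hal. reflexivity.
        -- exists (Z.of_nat (S k)). rewrite <- Hj.
           replace (h * (n' ^ Z.of_nat (S k) * s) * j) with (h * n' ^ Z.of_nat (S k) * (s * j)) by ring.
           rewrite <- app_assoc, <- (L1 m n m' n' h Em En (S k) (s * j)).
           rewrite app_assoc, Hk0. reflexivity.
  -
    assert (Edd : d' = d).
    { apply Nat.le_antisymm; [apply Hmin'; exact Hd1 | apply Hd2; exact Hw']. }
    subst d'.
    destruct d as [|k]; [exfalso; apply Hns; inversion He'; assumption|].
    pose proof (walk_Tedge_tsum _ _ _ _ _ He') as Ets.
    assert (Ek0 : k0 = - Z.of_nat (S k)) by lia. subst k0.
    exists x0. split; [split; [auto|exists y0; split; auto; exists (- Z.of_nat (S k)); auto]|].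
    intros x. split.
    + intros [Hxa [y1 [Hy1a [k1 Hk1]]]].
      assert (Ek1 : k1 = - Z.of_nat (S k)).
      { apply tsum_bs in Hk1. rewrite tsum_app, tsum_tpow in Hk1. apply sa_tsum in Hxa. apply sa_tsum in Hy1a.
        apply sa_tsum in Hx0a. lia. }
      subst k1.
      destruct (sa_diff _ _ _ _ _ Hx0a Hxa) as [r Hr].
      destruct (sa_diff _ _ _ _ _ Hy0a Hy1a) as [c Hc].
      set (T := tpow (- Z.of_nat (S k))) in *.
      assert (E1 : bs_eq m n (x0 ++ apow r ++ T) (x0 ++ T ++ apow c)).
      { rewrite app_assoc, Hr, Hk1, <- Hc, app_assoc, Hk0. reflexivity. }
      apply cancel_l in E1.
      assert (E2 : bs_eq m n (tpow (Z.of_nat (S k)) ++ apow r ++ T) (apow c)).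
      { rewrite E1. rewrite app_assoc. unfold T. rewrite tpow_inv. reflexivity. }
      apply keyK in E2; auto.
      destruct (Rk_arith m n m' n' h k r c Hh Em En Hm' Hg E2) as [v [Hv _]].
      destruct (abs_pow_split m' (Z.of_nat (S k))) as [s [Hs Hs1]].
      exists (s * v). rewrite Hs.
      replace (h * (m' ^ Z.of_nat (S k) * s) * (s * v)) with r.
      * exact Hr.
      * rewrite Hv, Em, Nat2Z.inj_succ, Z.pow_succ_r by lia.
        destruct Hs1; subst s; ring.
    + intros [j Hj].
      destruct (abs_pow_split m' (Z.of_nat (S k))) as [s [Hs Hs1]].
      rewrite Hs in Hj.
      split.
      * destruct Hx0a as [al Hal]. exists (al + h * (m' ^ Z.of_nat (S k) * s) * j).
        rewrite <- apow_add, app_assoc, Hal. exact Hj.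
      * exists (y0 ++ apow (h * n' ^ Z.of_nat (S k) * (s * j))). split.
        -- destruct Hy0a as [al Hal]. exists (al + h * n' ^ Z.of_nat (S k) * (s * j)).
           rewrite <- apow_add, app_assoc, Hal. reflexivity.
        -- exists (- Z.of_nat (S k)). rewrite <- Hj.
           assert (Hx0' : bs_eq m n x0 (y0 ++ tpow (Z.of_nat (S k)))).
           { rewrite <- Hk0. rewrite <- app_assoc, tpow_inv', app_nil_r. reflexivity. }
           rewrite Hx0'.
           replace (h * (m' ^ Z.of_nat (S k) * s) * j) with (h * m' ^ Z.of_nat (S k) * (s * j)) by ring.
           rewrite <- !app_assoc. rewrite (app_assoc (tpow (Z.of_nat (S k))) (apow _)), (L1 m n m' n' h Em En (S k) (s * j)).
           rewrite <- !app_assoc, tpow_inv, app_nil_r. reflexivity.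
Qed.
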